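(* Let $G$ be a connected graph on at least $3$ vertices and let $G'$ be obtained from $G$ by splitting a vertex $v$. Then $rx_3(G')\le rx_3(G)+1$.
   Context: To split a vertex $v$ of $G$ means: replace $v$ by two new adjacent vertices $v_1,v_2$, and replace each edge $vu$ of $G$ by exactly one of the edges $v_1u$ or $v_2u$ (the other endpoint $u$ unchanged); all other edges are kept. An edge coloring may give adjacent edges the same color; a tree is rainbow if its edges have pairwise distinct colors. For a connected graph on at least $3$ vertices, $rx_3$ is the minimum number of colors in an edge coloring such that every set of $3$ vertices lies in some rainbow tree. *)

(* Defs.v *)
From mathcomp Require Import all_boot.
Set Implicit Arguments. Unset Strict Implicit. Unset Printing Implicit Defensive.

Definition simple_graph (T : finType) (e : rel T) : Prop :=
  symmetric e /\ irreflexive e.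

Definition connected_graph (T : finType) (e : rel T) : Prop :=
  forall x y : T, connect e x y.

Definition is_edge (T : finType) (e : rel T) (f : {set T}) : Prop :=
  exists x y : T, e x y /\ f = [set x; y].

Definition span_vertices (T : finType) (F : {set {set T}}) : {set T} :=
  \bigcup_(f in F) f.

Definition is_tree (T : finType) (e : rel T) (F : {set {set T}}) : Prop :=
  (forall f, f \in F -> is_edge e f) /\
  (forall x y, x \in span_vertices F -> y \in span_vertices F ->
     connect (fun a b => [set a; b] \in F) x y) /\
  #|F| = #|span_vertices F| - 1.

Definition rainbow (T : finType) (c : {set T} -> nat) (F : {set {set T}}) : Prop :=
  {in F &, injective c}.

Definition rx3_colouring (T : finType) (e : rel T) (k : nat)
    (c : {set T} -> nat) : Prop :=
  (forall x y, e x y -> c [set x; y] < k) /\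
  (forall S : {set T}, #|S| = 3 ->
     exists F : {set {set T}},
       [/\ is_tree e F, rainbow c F & S \subset span_vertices F]).

Definition rx3_colourable (T : finType) (e : rel T) (k : nat) : Prop :=
  exists c, rx3_colouring e k c.

Definition is_rx3 (T : finType) (e : rel T) (k : nat) : Prop :=
  rx3_colourable e k /\ forall j, rx3_colourable e j -> k <= j.

(* New vertex set is option T: Some v plays v1,
   None plays v2, Some u (u <> v) is the old u. An edge vu goes to v1 if
   side u, otherwise to v2; v1v2 is an edge; all other edges are kept. *)
Definition split_rel (T : finType) (e : rel T) (v : T) (side : T -> bool)
    : rel (option T) :=
  fun x y =>
    match x, y with
    | Some a, Some b =>
        if a == v then (b != v) && e v b && side b
        else if b == v then e v a && side a
        else e a b
    | Some a, None | None, Some a =>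
        if a == v then true else e v a && ~~ side a
    | None, None => false
    end.

(* Main.v *)
Require Import Defs.
From mathcomp Require Import all_boot.
From mathcomp Require Import zify.
From Stdlib Require Import Classical.
Set Implicit Arguments. Unset Strict Implicit. Unset Printing Implicit Defensive.

Definition pr (T : finType) (v : T) (o : option T) : T := odflt v o.

Definition gl (T : finType) (v : T) (side : T -> bool) (f : {set T}) (a : T)
  : option T :=
  if a == v then (if [exists u in f, side u && (u != v)] then Some v else None)
  else Some a.

Definition lift (T : finType) (v : T) side (f : {set T}) : {set option T} :=
  gl v side f @: f.

Definition e0 (T : finType) (v : T) : {set option T} := [set Some v; None].

Definition col' (T : finType) (v : T) (k : nat) (c : {set T} -> nat)
  (f : {set option T}) : nat :=
  if f == e0 v then k else c (pr v @: f).

Definition liftF (T : finType) (v : T) side (F : {set {set T}})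
  : {set {set option T}} :=
  lift v side @: F :|: (if v \in span_vertices F then [set e0 v] else set0).

Lemma pr_gl (T : finType) (v : T) side f a : pr v (gl v side f a) = a.
Proof. rewrite /gl; case: eqP => [->|//]; by case: ifP. Qed.

Lemma pr_lift (T : finType) (v : T) side f : pr v @: lift v side f = f.
Proof.
rewrite /lift -imset_comp.
have -> : [set (pr v \o gl v side f) x | x in f] = [set x | x in f].
  by apply: eq_imset => x /=; rewrite pr_gl.
by rewrite imset_id.
Qed.

Lemma lift_inj (T : finType) (v : T) side : injective (lift v side).
Proof.
have h : cancel (lift v side) (fun A => pr v @: A) by move=> f; exact: pr_lift.
exact: can_inj h.
Qed.

Lemma lift2 (T : finType) (v : T) side (f : {set T}) x y :
  f = [set x; y] -> lift v side f = [set gl v side f x; gl v side f y].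
Proof. move=> hf. rewrite /lift; set g := gl v side f. by rewrite hf imsetU1 imset_set1. Qed.

Lemma lift_neq (T : finType) (e : rel T) v side f :
  irreflexive e -> is_edge e f -> lift v side f != e0 v.
Proof.
move=> ei [x [y [hxy hf]]]; apply/eqP => hl.
have : pr v @: lift v side f = [set v].
  by rewrite hl /e0 imsetU1 imset_set1 /pr /= setUid.
rewrite pr_lift hf => h.
have hx : x \in [set v] by rewrite -h set21.
have hy : y \in [set v] by rewrite -h set22.
move: hx hy hxy; rewrite !in_set1 => /eqP -> /eqP ->; by rewrite ei.
Qed.

Lemma span_liftF (T : finType) (v : T) side F o :
  (o \in span_vertices (liftF v side F)) = (pr v o \in span_vertices F).
Proof.
apply/bigcupP/idP.
- move=> [f']; rewrite /liftF in_setU => /orP[/imsetP[f fF ->]|].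
  + move=> ho; apply/bigcupP; exists f => //. rewrite -(pr_lift v side f).
    exact: imset_f.
  + case: ifP => hv; last by rewrite in_set0.
    rewrite in_set1 => /eqP -> ho.
    have -> : pr v o = v by move: ho; rewrite /e0 !inE => /orP[] /eqP ->.
    exact: hv.
- move=> hpo; have hpo' := hpo; move/bigcupP: hpo' => [f fF hf].
  case: (eqVneq (pr v o) v) => hpv.
  + have hv : v \in span_vertices F by rewrite -hpv.
    exists (e0 v); first by rewrite /liftF in_setU hv in_set1 eqxx orbT.
    case: o {hpo hf} hpv => [a /= |_]; last by rewrite /e0 !inE eqxx orbT.
    by rewrite /pr /= => ->; rewrite /e0 !inE eqxx.
  + exists (lift v side f); first by rewrite /liftF in_setU imset_f.
    case: o hpv hf {hpo} => [a /= ha hf | /= ]; last by rewrite eqxx.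
    apply/imsetP; exists a => //. by rewrite /gl (negbTE ha).
Qed.

Lemma card_pr (T : finType) (v : T) (X : {set T}) :
  #|pr v @^-1: X| = #|X| + (v \in X).
Proof.
have hN : None \notin [set Some x | x in X].
  by apply/imsetP => [[x _]].
case hv : (v \in X).
- have -> : pr v @^-1: X = None |: [set Some x | x in X].
    apply/setP => o; case: o => [a|]; rewrite !inE /pr /= ?hv //.
    by rewrite (mem_imset _ _ (@Some_inj _)).
  rewrite cardsU1 hN card_imset; last exact: Some_inj.
  by rewrite addnC.
- have -> : pr v @^-1: X = [set Some x | x in X].
    apply/setP => o; case: o => [a|]; rewrite !inE /pr /= ?hv.
      by rewrite (mem_imset _ _ (@Some_inj _)).
    by rewrite (negbTE hN).
  rewrite card_imset; last exact: Some_inj.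
  by rewrite addn0.
Qed.

Lemma split_pr (T : finType) (e : rel T) v side x y : symmetric e ->
  split_rel e v side x y -> [set x; y] != e0 v -> e (pr v x) (pr v y).
Proof.
move=> es. case: x => [a|]; case: y => [b|] //=; rewrite /e0 /pr /=.
- case: eqP => [->|ha]; first by move=> /andP[/andP[_ ->]].
  case: eqP => [->|hb]; first by rewrite es => /andP[->].
  done.
- case: eqP => [-> _|ha]; first by rewrite eqxx.
  by rewrite es => /andP[->].
- case: eqP => [-> _|ha]; first by rewrite setUC eqxx.
  by move=> /andP[->].
Qed.

Lemma ex_side (T : finType) (v : T) side x y : x = v -> y != v ->
  [exists u in [set x; y], side u && (u != v)] = side y.
Proof.
move=> hx hy; apply/existsP/idP => [[u]|hs].
- rewrite !inE => /andP[/orP[/eqP->|/eqP->]] /andP[hs hu] //.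
  by rewrite hx eqxx in hu.
- by exists y; rewrite !inE eqxx orbT hs hy.
Qed.

Lemma gl_edge (T : finType) (e : rel T) v side x y :
  symmetric e -> irreflexive e -> e x y ->
  split_rel e v side (gl v side [set x; y] x) (gl v side [set x; y] y).
Proof.
move=> es ei hxy.
have nxy : x != y by apply/eqP => hh; move: hxy; rewrite hh ei.
rewrite /gl.
case: (eqVneq x v) => hx.
- have hy : y != v by rewrite -hx eq_sym.
  rewrite (negbTE hy) (ex_side _ hx hy).
  move: hxy; rewrite hx => hvy.
  case: ifP => hs /=; rewrite ?eqxx ?(negbTE hy) hvy ?hs //.
- case: (eqVneq y v) => hy.
  + rewrite setUC (ex_side _ hy hx).
    move: hxy; rewrite hy es => hvx.
    case: ifP => hs /=; rewrite ?eqxx ?(negbTE hx) hvx ?hs //.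
  + by rewrite /= (negbTE hx) (negbTE hy).
Qed.

Lemma connect_map (T T' : finType) (h : T -> T') (r : rel T) (r' : rel T') :
  (forall a b, r a b -> connect r' (h a) (h b)) ->
  forall a b, connect r a b -> connect r' (h a) (h b).
Proof.
move=> H a b /connectP [p]; elim: p a => [|c p IH] a /=.
- by move=> _ ->.
- move=> /andP[hac hp] hb. apply: connect_trans (H _ _ hac) (IH _ hp hb).
Qed.

Lemma pad3 (T : finType) (A : {set T}) : #|A| <= 3 -> 3 <= #|T| ->
  exists B : {set T}, A \subset B /\ #|B| = 3.
Proof.
move=> hA hT. move: (erefl (3 - #|A|)); move: {2}(3 - #|A|) => n.
elim: n A hA => [|n IH] A hA hn.
- by exists A; split => //; lia.
- have hs : ~~ ([set: T] \subset A).
    by apply/negP => /subset_leq_card; rewrite cardsT; lia.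
  case/subsetPn: hs => x _ hx.
  have hc : #|x |: A| = #|A|.+1 by rewrite cardsU1 hx.
  have [B [hB1 hB2]] := IH (x |: A) ltac:(lia) ltac:(lia).
  exists B; split => //. exact: subset_trans (subsetUr _ _) hB1.
Qed.

Lemma min_exists (P : nat -> Prop) n : P n ->
  exists m, [/\ P m, (forall j, P j -> m <= j) & m <= n].
Proof.
elim/ltn_ind: n => n IH hP.
case: (classic (exists j, j < n /\ P j)) => [[j [hj hPj]]|hno].
- have [m [hm1 hm2 hm3]] := IH j hj hPj.
  exists m; split => //; exact: leq_trans hm3 (ltnW hj).
- exists n; split => // j hPj. rewrite leqNgt; apply/negP => hj; apply: hno.
  by exists j.
Qed.

Lemma tree_lift (T : finType) (e : rel T) v side k c (F : {set {set T}}) :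
  symmetric e -> irreflexive e ->
  (forall x y, e x y -> c [set x; y] < k) ->
  is_tree e F -> rainbow c F ->
  is_tree (split_rel e v side) (liftF v side F) /\
  rainbow (col' v k c) (liftF v side F).
Proof.
move=> es ei hcol [hE [hC hN]] hR.
have hneq : forall f, f \in F -> lift v side f != e0 v.
  by move=> f fF; exact: lift_neq ei (hE f fF).
have hcl : forall f, f \in F -> col' v k c (lift v side f) = c f.
  by move=> f fF; rewrite /col' (negbTE (hneq f fF)) pr_lift.
have hlt : forall f, f \in F -> c f < k.
  by move=> f fF; have [x [y [hxy ->]]] := hE f fF; exact: hcol.
have hmem : forall f', f' \in liftF v side F ->
    (exists2 f, f \in F & f' = lift v side f) \/
    (f' = e0 v /\ v \in span_vertices F).
  move=> f'; rewrite /liftF in_setU => /orP[/imsetP[f fF ->]|]; first by left; exists f.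
  by case: ifP => hv; rewrite ?in_set0 // in_set1 => /eqP ->; right.
split; last first.
  move=> f1 f2 h1 h2.
  case: (hmem _ h1) => [[g1 g1F ->]|[-> _]]; case: (hmem _ h2) => [[g2 g2F ->]|[-> _]] //.
  - by rewrite !hcl // => /hR -> //.
  - rewrite hcl // /col' eqxx => hh; have := hlt _ g1F; by rewrite hh ltnn.
  - rewrite hcl // /col' eqxx => hh; have := hlt _ g2F; by rewrite -hh ltnn.
split; [|split].
- move=> f' /hmem [[f fF ->]|[-> _]].
  + have [x [y [hxy hf]]] := hE f fF.
    exists (gl v side f x), (gl v side f y); split; last exact: lift2.
    by rewrite hf; apply: gl_edge.
  + by exists (Some v), None; split => //=; rewrite eqxx.
- set R' := fun a b : option T => [set a; b] \in liftF v side F.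
  have Rs : connect_sym R'.
    by apply: sym_connect_sym => a b; rewrite /R' setUC.
  have hv0 : v \in span_vertices F -> R' (Some v) None.
    by move=> hv; rewrite /R' /liftF in_setU hv in_set1 eqxx orbT.
  have hfib : forall (a : T) (f : {set T}), a \in f -> f \in F -> connect R' (Some a) (gl v side f a).
    move=> a f af fF; rewrite /gl; case: (eqVneq a v) => [ha|//].
    have hv : v \in span_vertices F by apply/bigcupP; exists f => //; rewrite -ha.
    rewrite ha; case: ifP => _ //. exact: connect1 (hv0 hv).
  have hstep : forall a b, [set a; b] \in F -> connect R' (Some a) (Some b).
    move=> a b hab.
    apply: connect_trans (hfib a _ (set21 a b) hab) _.
    rewrite Rs; apply: connect_trans (hfib b _ (set22 a b) hab) _.
    rewrite Rs; apply: connect1.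
    by rewrite /R' -(lift2 v side (erefl [set a; b])) /liftF in_setU imset_f.
  have hpr : forall o, o \in span_vertices (liftF v side F) -> connect R' (Some (pr v o)) o.
    move=> [a|] ho; first exact: connect0.
    have hv : v \in span_vertices F.
      by rewrite -[v]/(pr v None) -(span_liftF v side F None).
    exact: connect1 (hv0 hv).
  move=> x y hx hy.
  apply: connect_trans (_ : connect R' x (Some (pr v x))) _; first by rewrite Rs; exact: hpr.
  apply: connect_trans (_ : connect R' (Some (pr v y)) y); last exact: hpr.
  apply: (connect_map (h := fun a => Some a)) hstep _ _ _.
  by apply: hC; rewrite -(span_liftF v side).
- have -> : span_vertices (liftF v side F) = pr v @^-1: span_vertices F.
    by apply/setP => o; rewrite inE span_liftF.
  rewrite card_pr.
  have -> : #|liftF v side F| = #|F| + (v \in span_vertices F).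
    rewrite /liftF; case: ifP => hv.
    + rewrite setUC cardsU1 card_imset; last exact: lift_inj.
      have -> : e0 v \notin lift v side @: F.
        by apply/imsetP => [[f fF hf]]; move: (hneq f fF); rewrite -hf eqxx.
      by rewrite addnC.
    + by rewrite setU0 card_imset ?addn0 //; exact: lift_inj.
  case hv : (v \in span_vertices F); last by rewrite !addn0.
  have : 0 < #|span_vertices F| by apply/card_gt0P; exists v.
  lia.
Qed.

Theorem theorem9 (T : finType) (e : rel T) (v : T) (side : T -> bool) (k : nat) :
  simple_graph e -> connected_graph e -> 3 <= #|T| ->
  is_rx3 e k ->
  exists k', is_rx3 (split_rel e v side) k' /\ k' <= k.+1.
Proof.
move=> [es ei] _ hT [[c [hcol h3]] _].
have hc' : rx3_colourable (split_rel e v side) k.+1.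
  exists (col' v k c); split.
  - move=> x y hxy; rewrite /col'; case: ifP => // /negbT hne.
    apply: leqW; rewrite imsetU1 imset_set1; apply: hcol.
    exact: (split_pr es hxy hne).
  - move=> S' hS'.
    have hle : #|pr v @: S'| <= 3 by rewrite -hS' leq_imset_card.
    have [S [hsub hS]] := pad3 hle hT.
    have [F [hF hrF hSF]] := h3 S hS.
    have [ht hr] := tree_lift v side es ei hcol hF hrF.
    exists (liftF v side F); split => //.
    apply/subsetP => o ho; rewrite (span_liftF v side).
    apply: (subsetP hSF); apply: (subsetP hsub); exact: imset_f.
have [m [hm1 hm2 hm3]] := min_exists hc'.
by exists m.
Qed.
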